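(* Let $K$ be a compact space, $|\cdot|$ a norm on $\mathbb{R}^n$, $f\colon K\to\mathbb{R}^n$ a continuous function and $\alpha>0$. Then every $\alpha$-perturbation of $f$ has a root in $K$ if and only if the restriction $f|_{|f|^{-1}(\{\alpha\})}$ cannot be extended to a continuous map $|f|^{-1}([0,\alpha])\to\mathbb{R}^n\setminus\{0\}$.
   Context: Here $|f|\colon K\to[0,\infty)$ denotes $x\mapsto|f(x)|$. An $\alpha$-perturbation of $f$ is a continuous function $g\colon K\to\mathbb{R}^n$ with $\max_{x\in K}|g(x)-f(x)|\le\alpha$. *)

(* Defs.v *)
From HB Require Import structures.
From mathcomp Require Import all_boot all_order all_algebra.
From mathcomp Require Import all_classical all_reals all_analysis.
Set Implicit Arguments. Unset Strict Implicit. Unset Printing Implicit Defensive.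
Import Order.TTheory GRing.Theory Num.Theory.
Import numFieldNormedType.Exports.
Local Open Scope ring_scope.

Definition is_norm (R : realType) (n : nat) (N : 'rV[R]_n -> R) : Prop :=
  [/\ forall x : 'rV[R]_n, N x = 0 -> x = 0,
      forall (a : R) (x : 'rV[R]_n), N (a *: x) = `|a| * N x
    & forall x y : 'rV[R]_n, N (x + y) <= N x + N y].

Definition perturbation (R : realType) (n : nat) (K : topologicalType)
  (N : 'rV[R]_n -> R) (alpha : R) (f g : K -> 'rV[R]_n) : Prop :=
  continuous g /\ forall x : K, N (g x - f x) <= alpha.

(* Main.v *)
Require Import Defs.
From HB Require Import structures.
From mathcomp Require Import all_boot all_order all_algebra.
From mathcomp Require Import all_classical all_reals all_analysis.
From mathcomp Require Import lra.
Import Order.TTheory GRing.Theory Num.Theory.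
Import numFieldNormedType.Exports.
Local Open Scope ring_scope.
Local Open Scope classical_set_scope.

Section NormFacts.
Variables (R : realType) (n : nat) (N : 'rV[R]_n -> R).
Hypothesis hN : is_norm N.

Lemma N0 : N 0 = 0.
Proof. case: hN => _ hZ _; by rewrite -(scale0r (0 : 'rV[R]_n)) hZ normr0 mul0r. Qed.

Lemma NN x : N (- x) = N x.
Proof. case: hN => _ hZ _; by rewrite -scaleN1r hZ normrN normr1 mul1r. Qed.

Lemma NZ a x : N (a *: x) = `|a| * N x.
Proof. by case: hN. Qed.

Lemma ND x y : N (x + y) <= N x + N y.
Proof. by case: hN. Qed.

Lemma Nge0 x : 0 <= N x.
Proof.
have := ND x (- x); rewrite subrr N0 NN => h.
lra.
Qed.

Lemma Neq0 x : N x = 0 -> x = 0.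
Proof. by case: hN => h _ _; apply: h. Qed.

Lemma Ndist x y : `|N x - N y| <= N (x - y).
Proof.
have h1 := ND (x - y) y; rewrite subrK in h1.
have h2 := ND (y - x) x; rewrite subrK -opprB NN in h2.
rewrite ler_norml; apply/andP; split; lra.
Qed.

Lemma Nsum (F : 'I_n -> 'rV[R]_n) :
  N (\sum_(i < n) F i) <= \sum_(i < n) N (F i).
Proof.
elim/big_rec2: _ => [|i y z _ h]; first by rewrite N0.
by apply: le_trans (ND _ _) _; rewrite lerD2l.
Qed.

Lemma Nbound x : N x <= (\sum_(j < n) N (delta_mx 0 j)) * `|x|.
Proof.
rewrite {1}(row_sum_delta x).
apply: le_trans (Nsum _) _.
rewrite mulr_suml; apply: ler_sum => j _.
rewrite NZ mulrC ler_wpM2l ?Nge0 //.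
rewrite [`|x|]mx_normrE.
exact: (le_bigmax _ (fun ij : 'I_1 * 'I_n => `|x ij.1 ij.2|) (0, j)).
Qed.

Lemma N_continuous : continuous N.
Proof.
move=> x; apply/(@cvgrPdist_le _ R^o _ _ (nbhs_filter x)) => e e0.
set C := \sum_(j < n) N (delta_mx 0 j).
have C0 : 0 <= C by apply: sumr_ge0 => j _; exact: Nge0.
apply/(@nbhs_normP R 'rV[R]_n); exists (e / (C + 1)) => /=.
  by rewrite divr_gt0 // ltr_wpDl.
move=> y; rewrite /ball_ /= => hy.
apply: le_trans (Ndist _ _) _.
apply: le_trans (Nbound _) _.
rewrite -/C.
have hy' : `|x - y| * (C + 1) < e by rewrite -ltr_pdivlMr // ltr_wpDl.
have t0 : 0 <= `|x - y| := normr_ge0 _.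
nra.
Qed.

End NormFacts.
Arguments N0 {R n N}.
Arguments NN {R n N}.
Arguments NZ {R n N}.
Arguments Nge0 {R n N}.
Arguments Neq0 {R n N}.
Arguments N_continuous {R n N}.

Section Cont.
Variables (R : realType) (n : nat).
Lemma cont_comb (T : topologicalType) (u v : T -> 'rV[R]_n) (w : T -> R) :
  continuous u -> continuous v -> continuous w ->
  continuous (fun x => u x + w x *: (v x - u x)).
Proof.
move=> cu cv cw x; apply: cvgD; first exact: cu.
by apply: cvgZ; [exact: cw | apply: cvgB; [exact: cv | exact: cu]].
Qed.

Lemma cont_s (T : topologicalType) (alpha : R) (d : T -> R) :
  0 < alpha -> continuous d ->
  continuous (fun x => alpha / Num.max alpha (d x)).
Proof.
move=> a0 cd x; apply: cvgM; first exact: cvg_cst.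
apply: cvgV; first by rewrite gt_eqF // lt_max a0.
have := @continuous_max R T (fun _ => alpha) _ x (@cvg_cst R^o alpha T (nbhs x) _) (cd x).
by apply.
Qed.

Lemma cont_q (T : topologicalType) (alpha : R) (a b : T -> R) :
  (forall x, b x != 0) -> continuous a -> continuous b ->
  continuous (fun x => Num.min 1 ((alpha - a x) / b x)).
Proof.
move=> b0 ca cb x.
have h2 : {for x, continuous (fun y => (alpha - a y) / b y)}.
  apply: cvgM; first by apply: cvgB; [exact: cvg_cst | exact: ca].
  by apply: cvgV; [exact: b0 | exact: cb].
have := @continuous_min R T (fun _ => 1) _ x (@cvg_cst R^o (1:R) T (nbhs x) _) h2.
by apply.
Qed.

End Cont.


Lemma within_setT (T U : topologicalType) (g : T -> U) :
  {within [set: T], continuous g} -> continuous g.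
Proof. by move=> H x; have := H x; rewrite /continuous_at nbhs_subspaceT. Qed.


Theorem lemma3p3 (R : realType) (n : nat) (K : topologicalType)
  (hK : compact [set: K]) (hH : hausdorff_space K)
  (N : 'rV[R]_n -> R) (hN : is_norm N)
  (f : K -> 'rV[R]_n) (hf : continuous f) (alpha : R) (halpha : 0 < alpha) :
  (forall g : K -> 'rV[R]_n, perturbation N alpha f g -> exists x : K, g x = 0)
  <->
  ~ (exists h : K -> 'rV[R]_n,
       [/\ {within [set x | N (f x) <= alpha], continuous h},
           (forall x, N (f x) <= alpha -> h x != 0)
         & (forall x, N (f x) = alpha -> h x = f x)]).
Proof.
have cN := N_continuous hN.
have cNf : continuous (N \o f) by move=> x; apply: continuous_comp; [exact: hf|exact: cN].
split.
- move=> Hall [h [hc hnz hb]].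
  pose A := [set x | N (f x) <= alpha].
  pose B := [set x | alpha <= N (f x)].
  pose d x := N (h x - f x).
  pose s x := alpha / Num.max alpha (d x).
  pose g1 x := f x + s x *: (h x - f x).
  pose g x := if N (f x) <= alpha then g1 x else f x.
  have clA : closed A.
    apply: (@preimage_closed _ _ (N \o f) [set y | y <= alpha]); last exact: closed_le.
    by move=> x _; exact: cNf.
  have clB : closed B.
    apply: (@preimage_closed _ _ (N \o f) [set y | alpha <= y]); last exact: closed_ge.
    by move=> x _; exact: cNf.
  have cg : continuous g.
    apply: within_setT.
    have -> : [set: K] = A `|` B.
      apply/seteqP; split => x // _; rewrite /A /B /=.
      by case: (leP (N (f x)) alpha) => H; [left|right; exact: ltW].
    apply: withinU_continuous => //.
      have cfA : continuous (f : subspace A -> _) by apply: continuous_subspaceT.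
      have chA : continuous (h : subspace A -> _) := hc.
      have cg1 : continuous (g1 : subspace A -> _).
        apply: cont_comb => //; apply: cont_s => //.
        move=> x; apply: continuous_comp; last exact: cN.
        by apply: cvgB; [exact: chA | exact: cfA].
      apply: subspace_eq_continuous cg1 => x; rewrite inE /A /= => Hx.
      rewrite /from_subspace /= /g; case: ifP => // /negP; contradiction.
    apply: (@subspace_eq_continuous _ B _ f); last exact: continuous_subspaceT.
    move=> x; rewrite inE /B /= => Hx; rewrite /from_subspace /= /g.
    case: ifP => // H.
    have Ha : N (f x) = alpha by apply/eqP; rewrite eq_le H Hx.
    by rewrite /g1 (hb x Ha) subrr scaler0 addr0.
  have [x gx0] : exists x, g x = 0.
    apply: Hall; split => // x; rewrite /g.
    case: ifP => H; last by rewrite subrr (N0 hN) ltW.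
    rewrite /g1 addrC addKr (NZ hN).
    have M0 : 0 < Num.max alpha (d x) by rewrite lt_max halpha.
    have s0 : 0 <= s x by rewrite /s divr_ge0 // ltW.
    rewrite ger0_norm // /s -/(d x) mulrAC ler_pdivrMr // ler_pM2l //.
    by rewrite le_max lexx orbT.
  move: gx0; rewrite /g; case: ifP => H; last first.
    move=> f0; move: H; rewrite f0 (N0 hN) => /negbT; rewrite -ltNge => H.
    by move: (lt_trans halpha H); rewrite ltxx.
  rewrite /g1 /s; case: (leP (d x) alpha) => Hd.
    rewrite divff ?gt_eqF // scale1r addrC subrK => h0.
    by move: (hnz x H); rewrite h0 eqxx.
  move=> /eqP; rewrite addrC addr_eq0 => /eqP H1.
  have := congr1 N H1; rewrite (NZ hN) (NN hN) -/(d x).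
  have d0 : 0 < d x by apply: lt_trans Hd.
  rewrite ger0_norm ?divr_ge0 ?ltW // divfK ?gt_eqF // => Ha.
  move: (hb x (esym Ha)) => hf0.
  by move: d0; rewrite /d hf0 subrr (N0 hN) ltxx.
- move=> Hnot g [gc gb].
  apply: contrapT => Hno.
  have g0 : forall x, g x != 0.
    by move=> x; apply/eqP => gx; apply: Hno; exists x.
  have Ng0 : forall x, N (g x) != 0.
    by move=> x; apply/eqP => /(Neq0 hN) gx; move: (g0 x); rewrite gx eqxx.
  pose q x := Num.min 1 ((alpha - N (f x)) / N (g x)).
  pose h x := f x + q x *: (g x - f x).
  apply: Hnot; exists h; split.
  + apply: continuous_subspaceT; apply: cont_comb => //.
    apply: cont_q => //.
    by move=> x; apply: continuous_comp; [exact: gc|exact: cN].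
  + move=> x Hx; apply/eqP => /eqP; rewrite /h addrC addr_eq0 => /eqP H1.
    have m0 : 0 < N (g x) by rewrite lt_neqAle eq_sym Ng0 (Nge0 hN).
    move: H1; rewrite /q; case: (leP 1 ((alpha - N (f x)) / N (g x))) => Hq H1.
      rewrite scale1r in H1.
      by move: (g0 x); rewrite -(subrK (f x) (g x)) H1 addNr eqxx.
    set qq := (alpha - N (f x)) / N (g x) in Hq H1.
    have q0 : 0 <= qq by rewrite /qq divr_ge0 ?subr_ge0 // ltW.
    have qm : qq * N (g x) = alpha - N (f x) by rewrite /qq divfK.
    have E1 : qq * N (g x - f x) = N (f x).
      by have := congr1 N H1; rewrite (NZ hN) (NN hN) ger0_norm.
    have H2 : qq *: g x = - ((1 - qq) *: f x).
      rewrite -(subrK (f x) (g x)) scalerDr H1 scalerBl scale1r opprB.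
      by rewrite addrC.
    have E2 : qq * N (g x) = (1 - qq) * N (f x).
      by have := congr1 N H2; rewrite (NZ hN) (NN hN) (NZ hN) !ger0_norm // subr_ge0 ltW.
    have e0 : N (g x - f x) <= alpha := gb x.
    have r1 : N (f x) <= qq * alpha.
      by rewrite -E1 ler_wpM2l.
    have r2 : alpha = (2 - qq) * N (f x) by nra.
    have : alpha <= (2 - qq) * qq * alpha.
      by rewrite {1}r2 -mulrA ler_wpM2l //; lra.
    have p : 0 < (1 - qq) * (1 - qq) * alpha by rewrite !mulr_gt0 // subr_gt0.
    nra.
  + move=> x Hx; rewrite /h /q Hx subrr mul0r.
    by rewrite min_r ?ler01 // scale0r addr0.
Qed.
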